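(* For $n\ge 3$, the path $P_n$ with $n$ vertices satisfies $\nu_*(P_n)\le 4n-5$.
   Context: For a finite simple graph $G=(V,E)$ with $\ell=|V|+|E|$, a construction sequence (c-sequence) is a bijection $x:\{1,\dots,\ell\}\to V\sqcup E$ such that every edge $e=uw$ satisfies $x^{-1}(e)>\max\{x^{-1}(u),x^{-1}(w)\}$. The cost of $x$ is $\nu(x)=\sum_{e=uw\in E}\big(2x^{-1}(e)-x^{-1}(u)-x^{-1}(w)\big)$, and $\nu_*(G)$ is the minimum of $\nu(x)$ over all c-sequences for $G$. $P_n$ is the path with vertex set $\{1,\dots,n\}$ and edges $\{j,j+1\}$, $1\le j\le n-1$. *)

(* Defs.v *)
From mathcomp Require Import all_boot.
Set Implicit Arguments. Unset Strict Implicit. Unset Printing Implicit Defensive.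

(* A finite simple graph is given by a vertex finType T and an adjacency
   relation g (symmetric, irreflexive).  Edges are the 2-element vertex sets
   {u,w} with g u w. *)
Definition is_edge (T : finType) (g : rel T) (e : {set T}) : bool :=
  [exists u, exists w, g u w && (e == [set u; w])].

Definition edge_t (T : finType) (g : rel T) := {e : {set T} | is_edge g e}.

Definition item_t (T : finType) (g : rel T) := (T + edge_t g)%type.

Definition ell (T : finType) (g : rel T) : nat := #|{: item_t g}|.

(* A c-sequence x : {1..ell} -> V ⊔ E is represented by its inverse
   bijection pos = x^{-1} : V ⊔ E -> {1..ell}; pos takes values in
   'I_(ell.+1) and must be injective with no value 0 (hence a bijection
   onto {1,...,ell}). *)
Definition is_cseq (T : finType) (g : rel T)
    (pos : {ffun item_t g -> 'I_(ell g).+1}) : bool :=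
  [&& injectiveb pos, [forall i, 0 < pos i] &
      [forall e : edge_t g, forall u in val e, pos (inl u) < pos (inr e)]].

Definition cost (T : finType) (g : rel T)
    (pos : {ffun item_t g -> 'I_(ell g).+1}) : nat :=
  \sum_(e : edge_t g) (2 * pos (inr e) - \sum_(u in val e) pos (inl u)).

Definition cost_attained (T : finType) (g : rel T) (k : nat) : bool :=
  [exists pos : {ffun item_t g -> 'I_(ell g).+1}, is_cseq pos && (cost pos == k)].

Lemma cseq_exists (T : finType) (g : rel T) : exists k, cost_attained g k.
Proof.
pose f (i : item_t g) : nat :=
  match i with inl v => (enum_rank v).+1 | inr e => #|T| + (enum_rank e).+1 end.
have hl : ell g = #|T| + #|{: edge_t g}| by rewrite /ell card_sum.
have fb i : f i < (ell g).+1.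
  case: i => [v|e] /=; rewrite hl ltnS.
    by apply: leq_trans (ltn_ord (enum_rank v)) (leq_addr _ _).
  by rewrite leq_add2l; apply: (ltn_ord (enum_rank e)).
pose pos := [ffun i => Ordinal (fb i)].
exists (cost pos); apply/existsP; exists pos; rewrite eqxx andbT.
apply/and3P; split.
- apply/injectiveP => [[v|e] [v'|e']] /=; rewrite !ffunE => /(congr1 val) /= H.
  + by move: H => [/ord_inj/enum_rank_inj ->].
  + by exfalso; move: (ltn_ord (enum_rank v)); rewrite H -addSnnS ltnNge leq_addr.
  + by exfalso; move: (ltn_ord (enum_rank v')); rewrite -H -addSnnS ltnNge leq_addr.
  + by move/eqP: H; rewrite eqn_add2l eqSS => /eqP/ord_inj/enum_rank_inj ->.
- by apply/forallP => -[v|e]; rewrite ffunE //= addnS.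
- apply/forallP => e; apply/forall_inP => u _; rewrite !ffunE /=.
  rewrite addnS ltnS; exact: leq_trans (ltn_ord (enum_rank u)) (leq_addr _ _).
Qed.

Definition nu_star (T : finType) (g : rel T) : nat := ex_minn (cseq_exists g).

Definition path_rel (n : nat) : rel 'I_n :=
  fun i j => (i.+1 == j :> nat) || (j.+1 == i :> nat).
Arguments path_rel n : clear implicits.

(* Main.v *)
Require Import Defs.
From mathcomp Require Import all_boot.
From mathcomp Require Import zify.

Section P.
Variable m : nat.
Let g := path_rel m.+1.

Lemma inK (i : 'I_m) : ((inord i : 'I_m.+1) : nat) = i.
Proof. by rewrite inordK // ltnS ltnW. Qed.
Lemma inKS (i : 'I_m) : ((inord i.+1 : 'I_m.+1) : nat) = i.+1.
Proof. by rewrite inordK // ltnS. Qed.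

Definition S2 (i : 'I_m) : {set 'I_m.+1} := [set inord i; inord i.+1].

Lemma S2_edge i : is_edge g (S2 i).
Proof.
apply/existsP; exists (inord i); apply/existsP; exists (inord i.+1).
apply/andP; split; last exact: eqxx.
rewrite /g /path_rel; apply/orP; left.
rewrite ?inK ?inKS //.
Qed.

Definition fe (i : 'I_m) : edge_t g := exist _ (S2 i) (S2_edge i).

Lemma sum_S2 (F : 'I_m.+1 -> nat) i :
  \sum_(u in S2 i) F u = F (inord i) + F (inord i.+1).
Proof.
rewrite /S2 big_setU1 ?big_set1 //= in_set1.
apply/negP => /eqP /(congr1 (@nat_of_ord _)); rewrite ?inK ?inKS //; lia.
Qed.

Lemma fe_inj : injective fe.
Proof.
move=> i j /(congr1 val) /= H.
have Hi : inord i \in S2 j by rewrite -H /S2 !inE eqxx.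
have Hj : inord j \in S2 i by rewrite H /S2 !inE eqxx.
move: Hi Hj; rewrite /S2 !inE => /orP[] /eqP /(congr1 (@nat_of_ord _));
  rewrite ?inK ?inKS // => Hij /orP[] /eqP /(congr1 (@nat_of_ord _));
  rewrite ?inK ?inKS // => Hji; apply: ord_inj; lia.
Qed.

Lemma fe_surj (e : edge_t g) : exists i, fe i = e.
Proof.
case: e => s Hs; have /existsP [u /existsP [w /andP [Huw /eqP Hs']]] := Hs.
move: Huw; rewrite /g /path_rel => /orP [] /eqP Huw.
- have Hu : u < m by move: (ltn_ord w); lia.
  exists (Ordinal Hu); apply: val_inj; change (S2 (Ordinal Hu) = s).
  rewrite Hs' /S2; congr [set _; _]; apply: ord_inj; rewrite inordK /=; lia.
- have Hw : w < m by move: (ltn_ord u); lia.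
  exists (Ordinal Hw); apply: val_inj; change (S2 (Ordinal Hw) = s).
  rewrite Hs' /S2 setUC; congr [set _; _]; apply: ord_inj; rewrite inordK /=; lia.
Qed.

Lemma card_edge : #|{: edge_t g}| = m.
Proof.
rewrite -[RHS]card_ord -(card_codom fe_inj); apply: eq_card => e.
rewrite inE; apply/esym/codomP; have [i <-] := fe_surj e; by exists i.
Qed.

Lemma fe_bij : bijective fe.
Proof. by apply: inj_card_bij fe_inj _; rewrite card_edge card_ord. Qed.

Lemma ell_g : ell g = (m + m).+1.
Proof. by rewrite /ell card_sum card_edge card_ord. Qed.

Definition pv (k : nat) : nat := if k == 0 then 1 else 2 * k.

Definition q (x : item_t g) : nat :=
  match x with
  | inl v => pv v
  | inr e => \sum_(u in val e) (val u) + 2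
  end.

Lemma q_fe i : q (inr (fe i)) = 2 * i + 3.
Proof.
rewrite /= sum_S2 ?inK ?inKS //; lia.
Qed.

Lemma q_bound x : q x < (ell g).+1.
Proof.
rewrite ell_g; case: x => [v|e].
  rewrite /= /pv; move: (ltn_ord v); case: eqP => _; lia.
have [i <-] := fe_surj e; rewrite q_fe; move: (ltn_ord i); lia.
Qed.

Definition pos : {ffun item_t g -> 'I_(ell g).+1} := [ffun x => inord (q x)].

Lemma posE x : nat_of_ord (pos x) = q x.
Proof. by rewrite ffunE inordK // q_bound. Qed.

Lemma pos_cseq : is_cseq pos.
Proof.
apply/and3P; split.
- apply/injectiveP => x y /(congr1 (@nat_of_ord _)); rewrite !posE.
  case: x => [v|e]; case: y => [v'|e'].
  + rewrite /= /pv => H; apply: congr1; apply: ord_inj; move: H.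
    do 2 case: eqP; lia.
  + have [i <-] := fe_surj e'; rewrite q_fe /= /pv; case: eqP; lia.
  + have [i <-] := fe_surj e; rewrite q_fe /= /pv; case: eqP; lia.
  + have [i <-] := fe_surj e; have [j <-] := fe_surj e'; rewrite !q_fe => H.
    have -> : i = j by apply: ord_inj; lia.
    by [].
- by apply/forallP => x; rewrite lt0n -lt0n posE; case: x => [v|e] /=;
    [rewrite /pv; case: eqP; lia | lia].
- apply/forallP => e; apply/forall_inP => u Hu.
  rewrite !posE; have [i Ei] := fe_surj e; subst e; rewrite q_fe /=.
  move: Hu; rewrite /= /S2 !inE => /orP [] /eqP -> ; rewrite /pv ?inK ?inKS //;
    case: eqP; lia.
Qed.

Lemma pos_cost : 2 <= m -> cost pos <= 4 * m.+1 - 5.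
Proof.
move=> Hm; rewrite /cost (reindex fe (onW_bij _ fe_bij)) /=.
under eq_bigr => i _ do rewrite posE q_fe sum_S2 !posE /= ?inK ?inKS //.
case: m Hm => [|m'] // Hm.
rewrite big_ord_recl /= /pv /=.
under eq_bigr => i _ do rewrite /bump /= add1n.
have -> : \sum_(i < m') (2 * (2 * i.+1 + 3) - (2 * i.+1 + 2 * i.+2)) = \sum_(i < m') 4.
  by apply: eq_bigr => i _; lia.
rewrite sum_nat_const card_ord; lia.
Qed.

End P.

Theorem theorem9 (n : nat) : 3 <= n -> nu_star (path_rel n) <= 4 * n - 5.
Proof.
case: n => [|m] // Hm.
rewrite /nu_star; case: ex_minnP => k _ Hk.
have Hc := @pos_cost m ltac:(lia).
apply: leq_trans Hc; apply: Hk; apply/existsP; exists (pos m); by rewrite pos_cseq eqxx.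
Qed.
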